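(* Let $E$ be a pseudo effect algebra satisfying (RDP) and let $m\in\mathcal J(E)$. Define $v_m:E\to\mathbb R$ by $$v_m(x):=\sup\{|m(x_1)|+\cdots+|m(x_n)|:\ x=x_1+\cdots+x_n,\ x_1,\dots,x_n\in E,\ n\ge1\}.$$ Then $v_m=|m|$, where $|m|:=m^++m^-$, $m^+:=m\vee0$ and $m^-:=-(m\wedge0)$ in $\mathcal J(E)$.
   Context: Pseudo effect algebra: partial algebra $(E;+,0,1)$ such that for all $a,b,c$: (i) $a+b$ and $(a+b)+c$ exist iff $b+c$ and $a+(b+c)$ exist, and then they are equal; (ii) there is exactly one $d$ and one $e$ with $a+d=e+a=1$; (iii) if $a+b$ exists there are $d,e$ with $a+b=d+a=b+e$; (iv) if $1+a$ or $a+1$ exists then $a=0$. (RDP): whenever $a_1+a_2=b_1+b_2$ there are $d_1,\dots,d_4$ with $d_1+d_2=a_1$, $d_3+d_4=a_2$, $d_1+d_3=b_1$, $d_2+d_4=b_2$. Signed measure: $m:E\to\mathbb R$ additive on defined sums; measure: nonnegative signed measure. $\mathcal J(E)$: signed measures that are differences of two measures, ordered by $m_1\le^+m_2$ iff $m_2-m_1$ is a measure; under (RDP) it is a lattice-ordered group with zero element the zero measure. *)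

(* Defs.v *)
From Stdlib Require Import Reals List.
Open Scope R_scope.

Definition oadd {E : Type} (add : E -> E -> option E) (x y : option E) : option E :=
  match x, y with
  | Some a, Some b => add a b
  | _, _ => None
  end.

Record PEA := {
  pea_car :> Type;
  pea_add : pea_car -> pea_car -> option pea_car;
  pea_zero : pea_car;
  pea_one : pea_car;
  (* (i): (a+b)+c defined iff a+(b+c) defined, and then equal *)
  pea_assoc : forall a b c : pea_car,
    oadd pea_add (pea_add a b) (Some c) = oadd pea_add (Some a) (pea_add b c);
  pea_compl_r : forall a, exists! d, pea_add a d = Some pea_one;
  pea_compl_l : forall a, exists! e, pea_add e a = Some pea_one;
  pea_conj : forall a b ab, pea_add a b = Some ab ->
    exists d e, pea_add d a = Some ab /\ pea_add b e = Some ab;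
  pea_one_add : forall a r,
    (pea_add pea_one a = Some r \/ pea_add a pea_one = Some r) -> a = pea_zero
}.

Arguments pea_add {p}.

Definition RDP (E : PEA) : Prop :=
  forall a1 a2 b1 b2 c : E,
    pea_add a1 a2 = Some c -> pea_add b1 b2 = Some c ->
    exists d1 d2 d3 d4 : E,
      pea_add d1 d2 = Some a1 /\ pea_add d3 d4 = Some a2 /\
      pea_add d1 d3 = Some b1 /\ pea_add d2 d4 = Some b2.

Definition signed_measure (E : PEA) (m : E -> R) : Prop :=
  forall a b c : E, pea_add a b = Some c -> m c = m a + m b.

Definition measure (E : PEA) (m : E -> R) : Prop :=
  signed_measure E m /\ forall x, 0 <= m x.

Definition inJ (E : PEA) (m : E -> R) : Prop :=
  exists m1 m2, measure E m1 /\ measure E m2 /\ forall x, m x = m1 x - m2 x.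

Definition leJ (E : PEA) (m1 m2 : E -> R) : Prop :=
  measure E (fun x => m2 x - m1 x).

Definition is_joinJ (E : PEA) (m1 m2 j : E -> R) : Prop :=
  inJ E j /\ leJ E m1 j /\ leJ E m2 j /\
  forall k, inJ E k -> leJ E m1 k -> leJ E m2 k -> leJ E j k.

Definition is_meetJ (E : PEA) (m1 m2 j : E -> R) : Prop :=
  inJ E j /\ leJ E j m1 /\ leJ E j m2 /\
  forall k, inJ E k -> leJ E k m1 -> leJ E k m2 -> leJ E k j.

Definition zero_measure (E : PEA) : E -> R := fun _ => 0.

(* x1 + (x2 + (... + xn)) for a nonempty list; None if undefined or empty *)
Fixpoint lsum {E : PEA} (xs : list E) : option E :=
  match xs with
  | nil => None
  | x :: nil => Some x
  | x :: rest => oadd pea_add (Some x) (lsum rest)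
  end.

Definition var_set (E : PEA) (m : E -> R) (x : E) : R -> Prop :=
  fun r => exists xs : list E, xs <> nil /\ lsum xs = Some x /\
    r = fold_right Rplus 0 (map (fun y => Rabs (m y)) xs).

(* Main.v *)
Require Import Defs.
From Stdlib Require Import Reals List Lra.
Open Scope R_scope.

Lemma add_one_zero (E : PEA) : pea_add (pea_one E) (pea_zero E) = Some (pea_one E).
Proof.
  destruct (pea_compl_r E (pea_one E)) as [d [Hd _]].
  pose proof (pea_one_add E d (pea_one E) (or_introl Hd)); subst; exact Hd.
Qed.

Lemma add_zero_one (E : PEA) : pea_add (pea_zero E) (pea_one E) = Some (pea_one E).
Proof.
  destruct (pea_compl_l E (pea_one E)) as [d [Hd _]].
  pose proof (pea_one_add E d (pea_one E) (or_intror Hd)); subst; exact Hd.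
Qed.

Lemma add_zero_r (E : PEA) (b : E) : pea_add b (pea_zero E) = Some b.
Proof.
  destruct (pea_compl_l E b) as [e [He _]].
  pose proof (pea_assoc E e b (pea_zero E)) as A.
  rewrite He in A; simpl in A; rewrite add_one_zero in A.
  destruct (pea_add b (pea_zero E)) as [w|] eqn:Hw; simpl in A; [|discriminate].
  destruct (pea_compl_r E e) as [d [Hd Hu]].
  rewrite <- (Hu b He), <- (Hu w (eq_sym A)); reflexivity.
Qed.

Lemma add_zero_l (E : PEA) (b : E) : pea_add (pea_zero E) b = Some b.
Proof.
  destruct (pea_compl_r E b) as [c [Hc _]].
  pose proof (pea_assoc E (pea_zero E) b c) as A.
  rewrite Hc in A; simpl in A; rewrite add_zero_one in A.
  destruct (pea_add (pea_zero E) b) as [w|] eqn:Hw; simpl in A; [|discriminate].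
  destruct (pea_compl_l E c) as [d [Hd Hu]].
  rewrite <- (Hu b Hc), <- (Hu w A); reflexivity.
Qed.

Lemma assoc_lr (E : PEA) (a b c ab r : E) :
  pea_add a b = Some ab -> pea_add ab c = Some r ->
  exists bc, pea_add b c = Some bc /\ pea_add a bc = Some r.
Proof.
  intros H1 H2. pose proof (pea_assoc E a b c) as A.
  rewrite H1 in A; simpl in A; rewrite H2 in A.
  destruct (pea_add b c) as [bc|]; simpl in A; [eauto|discriminate].
Qed.

Lemma assoc_rl (E : PEA) (a b c bc r : E) :
  pea_add b c = Some bc -> pea_add a bc = Some r ->
  exists ab, pea_add a b = Some ab /\ pea_add ab c = Some r.
Proof.
  intros H1 H2. pose proof (pea_assoc E a b c) as A.
  rewrite H1 in A; simpl in A; rewrite H2 in A.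
  destruct (pea_add a b) as [ab|]; simpl in A; [eauto|discriminate].
Qed.

Lemma lsum_cons (E : PEA) (a b : E) l :
  lsum (a :: b :: l) = oadd pea_add (Some a) (lsum (b :: l)).
Proof. reflexivity. Qed.

Section Main.
Variable E : PEA.
Hypothesis hRDP : RDP E.
Variables m m1 m2 : E -> R.
Hypothesis Hm1 : measure E m1.
Hypothesis Hm2 : measure E m2.
Hypothesis Hmd : forall x, m x = m1 x - m2 x.

Lemma sm_m : signed_measure E m.
Proof.
  intros a b c H. rewrite !Hmd.
  destruct Hm1 as [A _], Hm2 as [B _].
  rewrite (A _ _ _ H), (B _ _ _ H); ring.
Qed.

Lemma m_zero : m (pea_zero E) = 0.
Proof. pose proof (sm_m _ _ _ (add_zero_r E (pea_zero E))). lra. Qed.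

Definition S x r := exists y z, pea_add y z = Some x /\ r = m y.

Lemma S_bound x : bound (S x).
Proof.
  exists (m1 x). intros r [y [z [H ->]]].
  destruct Hm1 as [A B1], Hm2 as [_ B2].
  rewrite Hmd, (A _ _ _ H). specialize (B1 z); specialize (B2 y). lra.
Qed.

Lemma S_ne x : exists r, S x r.
Proof. exists (m (pea_zero E)), (pea_zero E), x. split; [apply add_zero_l|reflexivity]. Qed.

Definition P x := proj1_sig (completeness (S x) (S_bound x) (S_ne x)).

Lemma P_lub x : is_lub (S x) (P x).
Proof. unfold P. destruct (completeness _ _ _) as [p Hp]; exact Hp. Qed.

Lemma P_ge x r : S x r -> r <= P x.
Proof. intro H. apply (proj1 (P_lub x)). exact H. Qed.

Lemma P_le x b : (forall r, S x r -> r <= b) -> P x <= b.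
Proof. intro H. apply (proj2 (P_lub x)). intros r Hr; apply H; exact Hr. Qed.

Lemma P_nonneg x : 0 <= P x.
Proof. rewrite <- m_zero. apply P_ge. exists (pea_zero E), x. split; [apply add_zero_l|reflexivity]. Qed.

Lemma P_ge_m x : m x <= P x.
Proof. apply P_ge. exists x, (pea_zero E). split; [apply add_zero_r|reflexivity]. Qed.

Lemma P_sm : signed_measure E P.
Proof.
  intros x y z H. apply Rle_antisym.
  - apply P_le. intros r [c [c2 [Hc ->]]].
    destruct (hRDP c c2 x y z Hc H) as [d1 [d2 [d3 [d4 [E1 [E2 [E3 E4]]]]]]].
    rewrite (sm_m _ _ _ E1).
    assert (m d1 <= P x) by (apply P_ge; exists d1, d3; auto).
    assert (m d2 <= P y) by (apply P_ge; exists d2, d4; auto).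
    lra.
  - assert (K : forall a, S x a -> forall b, S y b -> a + b <= P z).
    { intros a [a' [a2 [Ha ->]]] b [b' [b2 [Hb ->]]].
      destruct (assoc_lr E a' a2 y x z Ha H) as [w [Hw1 Hw2]].
      destruct (assoc_rl E a2 b' b2 y w Hb Hw1) as [u [Hu1 Hu2]].
      destruct (pea_conj E a2 b' u Hu1) as [d [e [Hd _]]].
      assert (md : m d = m b').
      { pose proof (sm_m _ _ _ Hu1); pose proof (sm_m _ _ _ Hd); lra. }
      destruct (assoc_lr E d a2 b2 u w Hd Hu2) as [v [Hv1 Hv2]].
      destruct (assoc_rl E a' d v w z Hv2 Hw2) as [c [Hc1 Hc2]].
      rewrite <- md, <- (sm_m _ _ _ Hc1). apply P_ge. exists c, v; auto. }
    assert (P x <= P z - P y).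
    { apply P_le. intros a Ha.
      assert (P y <= P z - a) by (apply P_le; intros b Hb; pose proof (K a Ha b Hb); lra).
      lra. }
    lra.
Qed.

Lemma var_le : forall xs x, lsum xs = Some x ->
  fold_right Rplus 0 (map (fun y => Rabs (m y)) xs) <= 2 * P x - m x.
Proof.
  assert (pt : forall a, Rabs (m a) <= 2 * P a - m a).
  { intro a. pose proof (P_nonneg a); pose proof (P_ge_m a).
    unfold Rabs; destruct (Rcase_abs (m a)); lra. }
  induction xs as [|a rest IH]; intros x H; [discriminate|].
  destruct rest as [|b rest'].
  - simpl in H. injection H as <-. simpl. pose proof (pt a). lra.
  - rewrite lsum_cons in H.
    destruct (lsum (b :: rest')) as [r|] eqn:Hr; simpl in H; [|discriminate].
    specialize (IH r eq_refl).
    change (Rabs (m a) + fold_right Rplus 0 (map (fun y => Rabs (m y)) (b :: rest'))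
      <= 2 * P x - m x).
    rewrite (P_sm _ _ _ H), (sm_m _ _ _ H). pose proof (pt a). lra.
Qed.

End Main.

Theorem proposition4p5 (E : PEA) (hRDP : RDP E) (m : E -> R) (hm : inJ E m) :
  exists mp mm : E -> R,
    is_joinJ E m (zero_measure E) mp /\
    is_meetJ E m (zero_measure E) mm /\
    forall x : E, is_lub (var_set E m x) (mp x + - mm x).
Proof.
  destruct hm as [m1 [m2 [H1 [H2 H3]]]].
  set (p := P E m m1 m2 H1 H2 H3).
  pose proof (P_sm E hRDP m m1 m2 H1 H2 H3) as Psm.
  pose proof (P_nonneg E m m1 m2 H1 H2 H3) as Pnn.
  pose proof (P_ge_m E m m1 m2 H1 H2 H3) as Pgm.
  pose proof (P_le E m m1 m2 H1 H2 H3) as Ple.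
  pose proof (sm_m E m m1 m2 H1 H2 H3) as msm.
  fold p in Psm, Pnn, Pgm, Ple.
  exists p, (fun x => m x - p x).
  split; [|split].
  - unfold is_joinJ, leJ, inJ, zero_measure. split; [|split; [|split]].
    + exists p, (fun _ => 0). split; [split; auto|split].
      * split; [intros a b c H; lra | intros; lra].
      * intros; ring.
    + split; [intros a b c H; rewrite (Psm _ _ _ H), (msm _ _ _ H); ring|].
      intros x; specialize (Pgm x); lra.
    + split; [intros a b c H; rewrite (Psm _ _ _ H); ring|].
      intros x; specialize (Pnn x); lra.
    + intros k _ [Ak Bk] [Ck Dk].
      assert (ksm : signed_measure E k).
      { intros a b c H. pose proof (Ak _ _ _ H). pose proof (msm _ _ _ H). lra. }
      split; [intros a b c H; rewrite (Psm _ _ _ H), (ksm _ _ _ H); ring|].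
      intros x. cbv beta.
      assert (p x <= k x); [|lra].
      apply Ple. intros r [y [z [H ->]]].
      rewrite (ksm _ _ _ H). pose proof (Bk y); pose proof (Dk z). cbv beta in *. lra.
  - unfold is_meetJ, leJ, inJ, zero_measure. split; [|split; [|split]].
    + exists m1, (fun x => m2 x + p x). split; [exact H1|split].
      * pose proof H2 as [A B]. split.
        -- intros a b c H; rewrite (A _ _ _ H), (Psm _ _ _ H); ring.
        -- intros x; specialize (B x); specialize (Pnn x); lra.
      * intros; rewrite H3; ring.
    + split; [intros a b c H; rewrite (Psm _ _ _ H), (msm _ _ _ H); ring|].
      intros x; specialize (Pnn x); lra.
    + split; [intros a b c H; rewrite (Psm _ _ _ H), (msm _ _ _ H); ring|].
      intros x; specialize (Pgm x); lra.
    + intros k _ [Ak Bk] [Ck Dk].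
      assert (ksm : signed_measure E k).
      { intros a b c H. pose proof (Ak _ _ _ H). pose proof (msm _ _ _ H). lra. }
      split; [intros a b c H; rewrite (Psm _ _ _ H), (ksm _ _ _ H), (msm _ _ _ H); ring|].
      intros x. cbv beta.
      assert (p x <= m x - k x); [|lra].
      apply Ple. intros r [y [z [H ->]]].
      rewrite (ksm _ _ _ H), (msm _ _ _ H).
      pose proof (Bk z); pose proof (Dk y). cbv beta in *. lra.
  - intros x. split.
    + intros r [xs [_ [Hs ->]]].
      pose proof (var_le E hRDP m m1 m2 H1 H2 H3 xs x Hs). fold p in H. lra.
    + intros b Hub.
      assert (p x <= (b + m x) / 2); [|lra].
      apply Ple. intros r [y [z [H ->]]].
      assert (Hv : var_set E m x (Rabs (m y) + (Rabs (m z) + 0))).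
      { exists (y :: z :: nil). split; [discriminate|split; [exact H|reflexivity]]. }
      specialize (Hub _ Hv). rewrite (msm _ _ _ H).
      revert Hub; unfold Rabs; destruct (Rcase_abs (m y)); destruct (Rcase_abs (m z)); intros; lra.
Qed.
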